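(* Let $G$ be a finite group and $H$ a subgroup such that $\mathcal{O}_G(H)$ is Boolean. If there are $K,L\in\mathcal{O}_G(H)$ with $K<L$ and $|L:K|=2$, then there is an atom $A$ of $\mathcal{O}_G(H)$ such that $L=K\vee A$ and $|G:A^{\complement}|=2$.
   Context: $\mathcal{O}_G(H)=\{K\mid H\le K\le G\}$ with $\vee$ the subgroup generated; Boolean means isomorphic to the lattice of subsets of a finite set. An atom is a minimal element of $\mathcal{O}_G(H)\setminus\{H\}$; $A^{\complement}$ is the lattice complement of $A$ (so $A\wedge A^{\complement}=H$, $A\vee A^{\complement}=G$). *)

(* Defs.v *)
From mathcomp Require Import all_boot all_fingroup.
Set Implicit Arguments. Unset Strict Implicit. Unset Printing Implicit Defensive.
Local Open Scope group_scope.

Definition in_interval (gT : finGroupType) (G H K : {group gT}) : bool :=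
  (H \subset K) && (K \subset G).

(* O_G(H) is Boolean: order-isomorphic (hence lattice-isomorphic) to the
   lattice of subsets of a finite set, here {0,...,n-1}. *)
Definition boolean_interval (gT : finGroupType) (G H : {group gT}) : Prop :=
  exists n : nat, exists f : {group gT} -> {set 'I_n},
    (forall K L : {group gT}, in_interval G H K -> in_interval G H L ->
        (K \subset L) = (f K \subset f L)) /\
    (forall S : {set 'I_n}, exists K : {group gT}, in_interval G H K /\ f K = S).

Definition is_atom (gT : finGroupType) (G H A : {group gT}) : Prop :=
  [/\ in_interval G H A, A :!=: H &
      forall B : {group gT}, in_interval G H B -> B :!=: H ->
        B \subset A -> B :=: A].

Definition is_complement (gT : finGroupType) (G H A C : {group gT}) : Prop :=
  [/\ in_interval G H C, A :&: C = H & A <*> C = G].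

(* Main.v *)
Require Import Defs.
From mathcomp Require Import all_boot all_fingroup.
From mathcomp Require Import zify.
Local Open Scope group_scope.

Lemma idx2_max (gT : finGroupType) (K L M : {group gT}) :
  #|L : K| = 2 -> K \subset M -> M \subset L -> (M \subset K) || (L \subset M).
Proof.
move=> idx sKM sML.
have e := Lagrange_index sML sKM; rewrite idx in e.
have h1 := indexg_gt0 L M; have h2 := indexg_gt0 M K.
rewrite -!indexg_eq1.
move: e h1 h2; move: #|L : M| #|M : K| => a b e h1 h2.
apply/orP; case: (b =P 1%N) => nb; [left; by apply/eqP|right; apply/eqP; nia].
Qed.
Arguments idx2_max {gT K L M}.

Theorem lemma10p8 (gT : finGroupType) (G H K L : {group gT}) :
  H \subset G ->
  boolean_interval G H ->
  in_interval G H K -> in_interval G H L ->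
  K \proper L -> #|L : K| = 2 ->
  exists A : {group gT}, exists C : {group gT},
    [/\ is_atom G H A, L :=: K <*> A, is_complement G H A C & #|G : C| = 2].
Proof.
move=> sHG [n [f [fmono fsurj]]] iK iL pKL idx.
have iH : in_interval G H H by rewrite /in_interval subxx sHG.
have iG : in_interval G H G by rewrite /in_interval sHG subxx.
have fH : forall X, in_interval G H X -> f H \subset f X.
  by move=> X iX; rewrite -fmono //; case/andP: iX.
have fH0 : f H = set0.
  have [X [iX fX]] := fsurj set0; apply/eqP; rewrite -subset0 -fX; exact: fH.
have fGT : f G = setT.
  have [X [iX fX]] := fsurj setT; apply/eqP; rewrite eqEsubset subsetT /= -fX.
  by rewrite -fmono //; case/andP: iX.
case/andP: (pKL) => sKL nLK.
have [i iL_ iK_] : exists2 i, i \in f L & i \notin f K.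
  by apply/subsetPn; rewrite -fmono.
have [A [iA fA]] := fsurj [set i].
have [C [iC fC]] := fsurj (~: [set i]).
have sAL : A \subset L by rewrite fmono // fA sub1set.
have nAK : ~~ (A \subset K) by rewrite fmono // fA sub1set.
have nAH : ~~ (A \subset H) by rewrite fmono // fA fH0 sub1set in_set0.
have sKC : K \subset C.
  rewrite fmono // fC; apply/subsetP => j jK; rewrite !inE.
  by apply: contraNneq iK_ => eji; rewrite -eji.
case/andP: (iA) => sHA sAG; case/andP: (iC) => sHC sCG.
case/andP: (iK) => sHK sKG; case/andP: (iL) => sHL sLG.
have meet : A :&: C = H.
  apply/eqP; rewrite eqEsubset subsetI sHA sHC andbT.
  have iAC : in_interval G H (A :&: C)%G.
    by rewrite /in_interval /= subsetI sHA sHC (subset_trans (subsetIl _ _) sAG).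
  rewrite -[A :&: C]/(gval (A :&: C)%G) (fmono _ _ iAC iH) fH0 andbT; apply/subsetP => j jI; exfalso.
  have jA : j \in f A by apply: (subsetP _ j jI); rewrite -fmono // subsetIl.
  have jC : j \in f C by apply: (subsetP _ j jI); rewrite -fmono // subsetIr.
  by move: jA jC; rewrite fA fC !inE => ->.
have join : A <*> C = G.
  have iAC : in_interval G H (A <*> C)%G.
    by rewrite /in_interval /= join_subG sAG sCG (subset_trans sHA (joing_subl _ _)).
  apply/eqP; rewrite eqEsubset join_subG sAG sCG /=.
  rewrite -[A <*> C]/(gval (A <*> C)%G) fmono // fGT; apply/subsetP => j _.
  case: (j =P i) => [->|nji].
    have : f A \subset f (A <*> C)%G by rewrite -fmono // joing_subl.
    by move/subsetP; apply; rewrite fA set11.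
  have : f C \subset f (A <*> C)%G by rewrite -fmono // joing_subr.
  by move/subsetP; apply; rewrite fC !inE; apply/eqP.
have nLC : ~~ (L \subset C).
  apply: contra nAH => sLC; rewrite -meet subsetI subxx.
  exact: subset_trans sAL sLC.
have LKA : L :=: K <*> A.
  have sKAL : K <*> A \subset L by rewrite join_subG sKL sAL.
  have := idx2_max idx (joing_subl K A) sKAL.
  rewrite join_subG subxx /= (negbTE nAK) /= => sLKA.
  by apply/eqP; rewrite eqEsubset sLKA join_subG sKL sAL.
have nCL : L \subset 'N(C).
  apply/normsP => x xL.
  have xG : x \in G := subsetP sLG x xL.
  have nKL := index2_normal sKL idx.
  have KxK : K :^ x = K by case/normalP: nKL => _; apply.
  have iCx : in_interval G H (C :^ x)%G.
    rewrite /in_interval /= -{1}(conjGid xG) conjSg sCG andbT.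
    by rewrite (subset_trans sHK) // -{1}KxK conjSg.
  have niCx : i \notin f (C :^ x)%G.
    apply/negP => iCx_.
    have sACx : A \subset C :^ x by rewrite fmono // fA sub1set.
    have sKCx : K \subset C :^ x by rewrite -{1}KxK conjSg.
    case/negP: nLC; rewrite -(conjSg _ _ x) (conjGid xL) LKA join_subG.
    by rewrite sKCx sACx.
  have sCxC : C :^ x \subset C.
    rewrite -[C :^ x]/(gval (C :^ x)%G) fmono // fC.
    apply/subsetP => j jC; rewrite !inE.
    by apply: contraNneq niCx => eji; rewrite -eji.
  by apply/eqP; rewrite eqEcard sCxC cardJg leqnn.
have CLK : C :&: L = K.
  have sKCL : K \subset C :&: L by rewrite subsetI sKC sKL.
  have := @idx2_max _ K L (C :&: L)%G idx sKCL (subsetIr _ _).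
  rewrite /= subsetI (negbTE nLC) /= orbF => sCLK.
  by apply/eqP; rewrite eqEsubset sCLK subsetI sKC sKL.
have CLG : C * L = G.
  rewrite -norm_joinEr //; apply/eqP; rewrite eqEsubset join_subG sCG sLG /=.
  by rewrite -{1}join join_subG joing_subl (subset_trans sAL) // joing_subr.
exists A, C; split => //.
- split => //; first by apply: contraNneq nAH => ->.
  move=> B iB nBH sBA.
  have : f B \subset [set i] by rewrite -fA -fmono.
  rewrite subset1; case/orP => /eqP fB.
    apply/eqP; rewrite eqEsubset sBA (fmono A B iA iB) fA fB subxx //.
  case/negP: nBH; rewrite eqEsubset; case/andP: (iB) => -> _; rewrite andbT.
  by rewrite (fmono B H iB iH) fB fH0.
- have e := mul_cardG C L; rewrite CLG CLK -(Lagrange sKL) idx -(Lagrange sCG) in e.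
  have h1 := cardG_gt0 C; have h2 := cardG_gt0 K.
  move: e h1 h2; move: #|C| #|K| #|G : C| => c k x e h1 h2.
  by move/eqP: e; rewrite -mulnA eqn_pmul2l // [(x * k)%N]mulnC eqn_pmul2l // => /eqP ->.
Qed.
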